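(* Let $h$ and $k$ be relatively prime integers with $k>0$ and $h+k$ odd. Then $$B_{1}(h,k)=\frac{1-h}{2k}\sum_{j=1}^{k}\tan\left(\frac{\pi h(2j-1)}{2k}\right)\cot\left(\frac{\pi(2j-1)}{2k}\right).$$
   Context: $[x]$ denotes the greatest integer $\le x$. For integers $h,k$ with $k>0$ and $\gcd(h,k)=1$, $$B_{1}(h,k)=\sum_{j=1}^{k-1}(-1)^{j+\left[\frac{hj}{k}\right]}\left[\frac{hj}{k}\right].$$ *)

(* Defs.v *)
From Stdlib Require Import Reals ZArith List.
Open Scope R_scope.

(* [x] = floor; for k > 0, [h*j/k] = Z.div (h*j) k (Z.div rounds toward -oo). *)
Definition B1hk (h k : Z) : Z :=
  fold_right Z.add 0%Z
    (map (fun j : Z =>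
            let q := Z.div (h * j) k in
            ((if Z.even (j + q) then 1 else -1) * q)%Z)
         (map Z.of_nat (seq 1 (Z.to_nat (k - 1))))).

(* (-1)^(j+q) is written via parity, since Z.pow with a negative exponent is 0. *)

Definition cot (x : R) : R := cos x / sin x.

Definition sumR1 (k : Z) (f : Z -> R) : R :=
  fold_right Rplus 0 (map (fun n : nat => f (Z.of_nat n)) (seq 1 (Z.to_nat k))).

(* Main.v *)
Require Import Defs.
From Stdlib Require Import Reals ZArith List Lia Lra.
Open Scope R_scope.

Definition sm (N : nat) (f : nat -> R) : R := fold_right Rplus 0 (map f (seq 1 N)).

Lemma fr_c l c : fold_right Rplus c l = fold_right Rplus 0 l + c.
Proof. induction l; simpl; lra. Qed.
Lemma sm_0 f : sm 0 f = 0. Proof. reflexivity. Qed.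
Lemma sm_S N f : sm (S N) f = sm N f + f (S N).
Proof.
  unfold sm. rewrite seq_S, map_app, fold_right_app. simpl.
  rewrite fr_c; lra.
Qed.
Lemma sm_ext N f g : (forall i, (1 <= i <= N)%nat -> f i = g i) -> sm N f = sm N g.
Proof. induction N; intros H. reflexivity. rewrite !sm_S, (H (S N)) by lia. rewrite IHN. reflexivity. intros; apply H; lia. Qed.
Lemma sm_plus N f g : sm N (fun i => f i + g i) = sm N f + sm N g.
Proof. induction N. rewrite !sm_0; lra. rewrite !sm_S, IHN; lra. Qed.
Lemma sm_minus N f g : sm N (fun i => f i - g i) = sm N f - sm N g.
Proof. induction N. rewrite !sm_0; lra. rewrite !sm_S, IHN; lra. Qed.
Lemma sm_scal N c f : sm N (fun i => c * f i) = c * sm N f.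
Proof. induction N. rewrite !sm_0; lra. rewrite !sm_S, IHN; lra. Qed.
Lemma sm_const N c : sm N (fun _ => c) = INR N * c.
Proof. induction N. rewrite !sm_0; simpl; lra. rewrite !sm_S, IHN, S_INR; lra. Qed.
Lemma sm_swap N M f : sm N (fun i => sm M (fun j => f i j)) = sm M (fun j => sm N (fun i => f i j)).
Proof.
  induction N. unfold sm at 1. simpl. rewrite (sm_ext M _ (fun _ => 0)), sm_const; [lra|reflexivity].
  rewrite sm_S, IHN, <- sm_plus. apply sm_ext; intros; rewrite sm_S; reflexivity.
Qed.
Lemma sm_single N f i0 : (1 <= i0 <= N)%nat ->
  (forall i, (1 <= i <= N)%nat -> i <> i0 -> f i = 0) -> sm N f = f i0.
Proof.
  induction N; intros H1 H2. lia.
  rewrite sm_S. destruct (Nat.eq_dec i0 (S N)) as [->|ne].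
  - rewrite (sm_ext N f (fun _ => 0)), sm_const. lra. intros; apply H2; lia.
  - rewrite IHN, (H2 (S N)); try lra; try lia. intros; apply H2; lia.
Qed.
Lemma sm_shift N f : sm (S N) f = f 1%nat + sm N (fun i => f (S i)).
Proof. induction N. rewrite sm_S, !sm_0; lra. rewrite sm_S, IHN, sm_S. lra. Qed.
Lemma sm_refl N f : sm N f = sm N (fun i => f (S N - i)%nat).
Proof.
  revert f. induction N; intro f. reflexivity.
  rewrite sm_shift, sm_S, (IHN (fun i => f (S i))). replace (S (S N) - S N)%nat with 1%nat by lia.
  rewrite (sm_ext N (fun i => f (S (S N - i))) (fun i => f (S (S N) - i)%nat)). lra.
  intros; f_equal; lia.
Qed.

Definition sgn (z : Z) : R := if Z.even z then 1 else -1.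
Lemma sgn_add a b : sgn (a + b) = sgn a * sgn b.
Proof. unfold sgn; rewrite Z.even_add; destruct (Z.even a), (Z.even b); simpl; lra. Qed.
Lemma sgn_1 : sgn 1 = -1. Proof. reflexivity. Qed.
Lemma sgn_0 : sgn 0 = 1. Proof. reflexivity. Qed.
Lemma sgn_opp a : sgn (- a) = sgn a. Proof. unfold sgn; rewrite Z.even_opp; reflexivity. Qed.
Lemma sgn_sq a : sgn a * sgn a = 1. Proof. unfold sgn; destruct (Z.even a); lra. Qed.
Lemma sgn_mul_odd a m : Z.even m = false -> sgn (a * m) = sgn a.
Proof. intro H; unfold sgn; rewrite Z.even_mul, H, Bool.orb_false_r; reflexivity. Qed.
Lemma pow_sgn l : (-1) ^ l = sgn (Z.of_nat l).
Proof. induction l. reflexivity. rewrite Nat2Z.inj_succ, <- Z.add_1_r, sgn_add, <- IHl. simpl pow. rewrite sgn_1. lra. Qed.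
Lemma prod_ss a b : 2 * sin a * sin b = cos (a - b) - cos (a + b).
Proof. rewrite cos_minus, cos_plus; ring. Qed.
Lemma prod_cs a b : 2 * cos a * sin b = sin (b + a) + sin (b - a).
Proof. rewrite sin_minus, sin_plus; ring. Qed.
Lemma prod_sc a b : 2 * sin a * cos b = sin (b + a) - sin (b - a).
Proof. rewrite sin_minus, sin_plus; ring. Qed.

Lemma T1 t N : 2 * sin t * sm N (fun m => sin (2 * INR m * t)) = cos t - cos ((2 * INR N + 1) * t).
Proof.
  induction N. rewrite sm_0; simpl. replace ((2*0+1)*t) with t by ring. lra.
  rewrite sm_S, Rmult_plus_distr_l, IHN, S_INR.
  replace (2 * sin t * sin (2 * (INR N + 1) * t)) with (2 * sin (2*(INR N+1)*t) * sin t) by ring.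
  rewrite prod_ss.
  replace (2 * (INR N + 1) * t - t) with ((2 * INR N + 1) * t) by ring.
  replace (2 * (INR N + 1) * t + t) with ((2 * (INR N + 1) + 1) * t) by ring. ring.
Qed.

Lemma sgn_SS N : sgn (Z.of_nat (S N) + 1) = sgn (Z.of_nat N).
Proof. rewrite Nat2Z.inj_succ, <- Z.add_1_r, !sgn_add, sgn_1. ring. Qed.

Lemma T2 p N : 2 * cos p * sm N (fun l => sgn (Z.of_nat l + 1) * sin (2 * INR l * p))
  = sin p - sgn (Z.of_nat N) * sin ((2 * INR N + 1) * p).
Proof.
  induction N. rewrite sm_0; simpl. replace ((2*0+1)*p) with p by ring. rewrite sgn_0. lra.
  rewrite sm_S, Rmult_plus_distr_l, IHN, sgn_SS, S_INR.
  replace (2 * cos p * (sgn (Z.of_nat N) * sin (2 * (INR N + 1) * p))) with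
    (sgn (Z.of_nat N) * (2 * cos p * sin (2 * (INR N + 1) * p))) by ring.
  rewrite prod_cs.
  replace (2 * (INR N + 1) * p - p) with ((2 * INR N + 1) * p) by ring.
  replace (2 * (INR N + 1) * p + p) with ((2 * (INR N + 1) + 1) * p) by ring.
  rewrite Nat2Z.inj_succ, <- Z.add_1_r, sgn_add, sgn_1. ring.
Qed.

Lemma T3 a J : 2 * sin a * sm J (fun j => cos ((2 * INR j - 1) * a)) = sin (2 * INR J * a).
Proof.
  induction J. rewrite sm_0; simpl. replace (2*0*a) with 0 by ring. rewrite sin_0. lra.
  rewrite sm_S, Rmult_plus_distr_l, IHJ, S_INR, prod_sc.
  replace ((2 * (INR J + 1) - 1) * a + a) with (2 * (INR J + 1) * a) by ring.
  replace ((2 * (INR J + 1) - 1) * a - a) with (2 * INR J * a) by ring. ring.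
Qed.

Lemma cot_formula n t : (1 <= n)%nat -> cos (2 * INR n * t) = -1 -> sin (2 * INR n * t) = 0 ->
  sin t <> 0 /\ cos t / sin t = sm (n - 1) (fun m => sin (2 * INR m * t)).
Proof.
  intros Hn Hc Hs.
  pose proof (T1 t (n - 1)) as E. rewrite minus_INR in E by lia. simpl INR in E.
  replace ((2 * (INR n - 1) + 1) * t) with (2 * INR n * t - t) in E by ring.
  rewrite cos_minus, Hc, Hs in E.
  assert (St : sin t <> 0).
  { intro H0. rewrite H0 in E. pose proof (sin2_cos2 t) as P. unfold Rsqr in P. rewrite H0 in P. nra. }
  split; auto. apply (Rmult_eq_reg_l (2 * sin t)). rewrite E. field. auto. lra.
Qed.

Lemma sgn_pred n : (1 <= n)%nat -> sgn (Z.of_nat (n - 1)) = - sgn (Z.of_nat n).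
Proof. intro. rewrite Nat2Z.inj_sub by lia. unfold Z.sub. rewrite sgn_add. change (Z.of_nat 1) with 1%Z.
  rewrite sgn_opp, sgn_1. ring. Qed.

Lemma tan_formula n p : (1 <= n)%nat -> cos (2 * INR n * p) = - sgn (Z.of_nat n) -> sin (2 * INR n * p) = 0 ->
  cos p <> 0 /\ sin p / cos p = sm (n - 1) (fun l => sgn (Z.of_nat l + 1) * sin (2 * INR l * p)).
Proof.
  intros Hn Hc Hs.
  pose proof (T2 p (n - 1)) as E. rewrite minus_INR in E by lia. simpl INR in E.
  replace ((2 * (INR n - 1) + 1) * p) with (2 * INR n * p - p) in E by ring.
  rewrite sin_minus, Hc, Hs, sgn_pred in E by auto.
  pose proof (sgn_sq (Z.of_nat n)) as Q.
  assert (E2 : 2 * cos p * sm (n - 1) (fun l => sgn (Z.of_nat l + 1) * sin (2 * INR l * p)) = 2 * sin p).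
  { rewrite E. replace (- sgn (Z.of_nat n) * (0 * cos p - - sgn (Z.of_nat n) * sin p)) with
      (- (sgn (Z.of_nat n) * sgn (Z.of_nat n)) * sin p) by ring. rewrite Q. ring. }
  assert (Cp : cos p <> 0).
  { intro H0. rewrite H0 in E2. pose proof (sin2_cos2 p) as P. unfold Rsqr in P. rewrite H0 in P. nra. }
  split; auto. apply (Rmult_eq_reg_l (2 * cos p)). rewrite E2. field. auto. lra.
Qed.

Lemma cos_nat m : cos (INR m * PI) = sgn (Z.of_nat m).
Proof.
  induction m. simpl. rewrite Rmult_0_l, cos_0. reflexivity.
  rewrite S_INR, Rmult_plus_distr_r, Rmult_1_l, neg_cos, IHm, Nat2Z.inj_succ, <- Z.add_1_r, sgn_add, sgn_1. ring.
Qed.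

Lemma cos_int z : cos (IZR z * PI) = sgn z.
Proof.
  destruct (Z_le_gt_dec 0 z).
  - rewrite <- (Z2Nat.id z l), <- INR_IZR_INZ. apply cos_nat.
  - replace z with (- Z.of_nat (Z.to_nat (- z)))%Z by lia.
    rewrite opp_IZR, <- INR_IZR_INZ, sgn_opp, <- cos_nat, <- cos_neg. f_equal; ring.
Qed.

Lemma odd2 a : Z.even (2 * a - 1) = false.
Proof. rewrite Z.even_sub, Z.even_mul. reflexivity. Qed.

Lemma cos_sum n N : (1 <= n)%nat ->
  sm n (fun j => cos ((2 * INR j - 1) * (IZR N * PI / INR n))) =
  if Z.eqb (N mod Z.of_nat n) 0 then INR n * sgn (N / Z.of_nat n) else 0.
Proof.
  intros Hn. assert (nz : INR n <> 0) by (apply not_0_INR; lia).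
  assert (nz' : Z.of_nat n <> 0%Z) by lia.
  destruct (Z.eqb_spec (N mod Z.of_nat n) 0) as [H0|H0].
  - pose proof (Z.div_mod N (Z.of_nat n) nz') as D. rewrite H0, Z.add_0_r in D.
    set (q := (N / Z.of_nat n)%Z) in *.
    rewrite <- sm_const. apply sm_ext. intros j Hj.
    replace ((2 * INR j - 1) * (IZR N * PI / INR n)) with (IZR (q * (2 * Z.of_nat j - 1)) * PI).
    rewrite cos_int, sgn_mul_odd. reflexivity. apply odd2.
    rewrite D, mult_IZR, mult_IZR, minus_IZR, mult_IZR, <- !INR_IZR_INZ. field. auto.
  - set (a := IZR N * PI / INR n).
    assert (Sa : sin a <> 0).
    { intro S0. apply sin_eq_0_0 in S0. destruct S0 as [t Ht]. unfold a in Ht.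
      assert (IZR N = IZR (t * Z.of_nat n)).
      { rewrite mult_IZR, <- INR_IZR_INZ.
        assert (Ht' : IZR N * PI = (IZR t * PI) * INR n) by (rewrite <- Ht; field; auto).
        pose proof PI_RGT_0. apply (Rmult_eq_reg_r PI). rewrite Ht'. ring. lra. }
      apply eq_IZR in H. apply H0. rewrite H. apply Z_mod_mult. }
    pose proof (T3 a n) as E.
    rewrite (sin_eq_0_1 (2 * INR n * a)) in E.
    + apply (Rmult_eq_reg_l (2 * sin a)). rewrite E. ring. intro X. apply Sa. lra.
    + exists (2 * N)%Z. unfold a. rewrite mult_IZR. field. auto.
Qed.
Definition Dz (n : nat) (N : Z) : R :=
  if Z.eqb (N mod Z.of_nat n) 0 then INR n * sgn (N / Z.of_nat n) else 0.

Lemma mod_nz n h l : (1 <= l <= n - 1)%nat -> Z.gcd h (Z.of_nat n) = 1%Z ->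
  ((h * Z.of_nat l) mod Z.of_nat n <> 0)%Z.
Proof.
  intros Hl G H. apply Z.mod_divide in H; [|lia].
  apply Z.gauss in H. 2: rewrite Z.gcd_comm; auto.
  apply Z.divide_pos_le in H; lia.
Qed.

Lemma single_minus n h l : (1 <= l <= n - 1)%nat -> Z.gcd h (Z.of_nat n) = 1%Z ->
  sm (n - 1) (fun m => Dz n (h * Z.of_nat l - Z.of_nat m)) = INR n * sgn ((h * Z.of_nat l) / Z.of_nat n).
Proof.
  intros Hl G. pose proof (mod_nz n h l Hl G) as Nz.
  assert (P : (0 < Z.of_nat n)%Z) by lia.
  pose proof (Z.mod_pos_bound (h * Z.of_nat l) _ P) as B.
  pose proof (Z.div_mod (h * Z.of_nat l) (Z.of_nat n) ltac:(lia)) as D.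
  set (r := ((h * Z.of_nat l) mod Z.of_nat n)%Z) in *.
  set (q := ((h * Z.of_nat l) / Z.of_nat n)%Z) in *.
  rewrite (sm_single _ _ (Z.to_nat r)).
  - unfold Dz. rewrite Z2Nat.id by lia.
    replace (h * Z.of_nat l - r)%Z with (q * Z.of_nat n)%Z by lia.
    rewrite Z_mod_mult, Z.div_mul by lia. reflexivity.
  - lia.
  - intros i Hi Hne. unfold Dz. destruct (Z.eqb_spec ((h * Z.of_nat l - Z.of_nat i) mod Z.of_nat n) 0) as [E|E]; [|reflexivity].
    exfalso. apply Z.mod_divide in E; [|lia]. destruct E as [t Ht].
    assert (Ht2 : (r - Z.of_nat i = (t - q) * Z.of_nat n)%Z) by lia.
    assert (t - q = 0)%Z by nia. lia.
Qed.

Lemma single_plus n h l : (1 <= l <= n - 1)%nat -> Z.gcd h (Z.of_nat n) = 1%Z ->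
  sm (n - 1) (fun m => Dz n (h * Z.of_nat l + Z.of_nat m)) = INR n * sgn ((h * Z.of_nat l) / Z.of_nat n + 1).
Proof.
  intros Hl G. pose proof (mod_nz n h l Hl G) as Nz.
  assert (P : (0 < Z.of_nat n)%Z) by lia.
  pose proof (Z.mod_pos_bound (h * Z.of_nat l) _ P) as B.
  pose proof (Z.div_mod (h * Z.of_nat l) (Z.of_nat n) ltac:(lia)) as D.
  set (r := ((h * Z.of_nat l) mod Z.of_nat n)%Z) in *.
  set (q := ((h * Z.of_nat l) / Z.of_nat n)%Z) in *.
  rewrite (sm_single _ _ (Z.to_nat (Z.of_nat n - r))).
  - unfold Dz. rewrite Z2Nat.id by lia.
    replace (h * Z.of_nat l + (Z.of_nat n - r))%Z with ((q + 1) * Z.of_nat n)%Z by lia.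
    rewrite Z_mod_mult, Z.div_mul by lia. reflexivity.
  - lia.
  - intros i Hi Hne. unfold Dz. destruct (Z.eqb_spec ((h * Z.of_nat l + Z.of_nat i) mod Z.of_nat n) 0) as [E|E]; [|reflexivity].
    exfalso. apply Z.mod_divide in E; [|lia]. destruct E as [t Ht].
    assert (Ht2 : (r + Z.of_nat i = (t - q) * Z.of_nat n)%Z) by lia.
    assert (t - q = 1)%Z by nia. lia.
Qed.
Lemma sm_mul N M f g : sm N f * sm M g = sm N (fun i => sm M (fun j => f i * g j)).
Proof.
  induction N. rewrite !sm_0; ring.
  rewrite !sm_S, Rmult_plus_distr_r, IHN, sm_scal. reflexivity.
Qed.

Lemma per_j n h j : (1 <= n)%nat -> (1 <= j <= n)%nat -> sgn h = - sgn (Z.of_nat n) ->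
  tan (PI * IZR h * (2 * IZR (Z.of_nat j) - 1) / (2 * IZR (Z.of_nat n))) *
  cot (PI * (2 * IZR (Z.of_nat j) - 1) / (2 * IZR (Z.of_nat n))) =
  sm (n - 1) (fun l => sm (n - 1) (fun m => sgn (Z.of_nat l + 1) / 2 *
     (cos ((2 * INR j - 1) * (IZR (h * Z.of_nat l - Z.of_nat m) * PI / INR n)) -
      cos ((2 * INR j - 1) * (IZR (h * Z.of_nat l + Z.of_nat m) * PI / INR n))))).
Proof.
  intros Hn Hj Hs. assert (nz : INR n <> 0) by (apply not_0_INR; lia).
  rewrite <- !INR_IZR_INZ.
  set (t := PI * (2 * INR j - 1) / (2 * INR n)).
  replace (PI * IZR h * (2 * INR j - 1) / (2 * INR n)) with (IZR h * t) by (unfold t; field; auto).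
  assert (E1 : 2 * INR n * t = IZR (2 * Z.of_nat j - 1) * PI)
    by (rewrite minus_IZR, mult_IZR, <- INR_IZR_INZ; unfold t; field; auto).
  assert (E2 : 2 * INR n * (IZR h * t) = IZR (h * (2 * Z.of_nat j - 1)) * PI)
    by (rewrite mult_IZR, minus_IZR, mult_IZR, <- INR_IZR_INZ; unfold t; field; auto).
  destruct (cot_formula n t Hn) as [_ Ct].
  { rewrite E1, cos_int. unfold sgn. rewrite odd2. reflexivity. }
  { apply sin_eq_0_1. eauto. }
  destruct (tan_formula n (IZR h * t) Hn) as [_ Tt].
  { rewrite E2, cos_int, sgn_mul_odd by apply odd2. auto. }
  { apply sin_eq_0_1. eauto. }
  unfold tan, cot. rewrite Ct, Tt, sm_mul.
  apply sm_ext. intros l Hl. apply sm_ext. intros m Hm.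
  replace (sgn (Z.of_nat l + 1) * sin (2 * INR l * (IZR h * t)) * sin (2 * INR m * t)) with
    (sgn (Z.of_nat l + 1) / 2 * (2 * sin (2 * INR l * (IZR h * t)) * sin (2 * INR m * t))) by field.
  rewrite prod_ss. f_equal. f_equal; f_equal;
  rewrite ?plus_IZR, ?minus_IZR, mult_IZR, <- !INR_IZR_INZ; unfold t; field; auto.
Qed.
Lemma IZR_fold (G : Z -> Z) L :
  IZR (fold_right Z.add 0%Z (map G (map Z.of_nat L))) = fold_right Rplus 0 (map (fun l => IZR (G (Z.of_nat l))) L).
Proof. induction L; simpl. reflexivity. rewrite plus_IZR, IHL. reflexivity. Qed.

Lemma sgn_2 x : sgn (2 * x) = 1.
Proof. unfold sgn. rewrite Z.even_mul. reflexivity. Qed.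

Lemma reflect_id n h : (1 <= n)%nat -> Z.gcd h (Z.of_nat n) = 1%Z -> sgn (h + Z.of_nat n) = -1 ->
  let q := fun l : nat => ((h * Z.of_nat l) / Z.of_nat n)%Z in
  2 * sm (n - 1) (fun l => sgn (Z.of_nat l + q l) * IZR (q l)) =
  (IZR h - 1) * sm (n - 1) (fun l => sgn (Z.of_nat l + q l)).
Proof.
  intros Hn G Hs q.
  assert (R1 : sm (n - 1) (fun l => sgn (Z.of_nat l + q l) * IZR (q l)) =
               sm (n - 1) (fun l => sgn (Z.of_nat l + q l) * (IZR h - 1 - IZR (q l)))).
  { rewrite sm_refl. replace (S (n - 1)) with n by lia. apply sm_ext. intros i Hi.
    assert (Qi : q (n - i)%nat = (h - 1 - q i)%Z).
    { unfold q. rewrite Nat2Z.inj_sub by lia.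
      replace (h * (Z.of_nat n - Z.of_nat i))%Z with (h * Z.of_nat n + - (h * Z.of_nat i))%Z by ring.
      rewrite Z.div_add_l by lia. rewrite Z_div_nz_opp_full. lia. lia. apply mod_nz; auto. }
    rewrite Qi, minus_IZR, minus_IZR. f_equal.
    replace (Z.of_nat (n - i) + (h - 1 - q i))%Z with
      ((Z.of_nat i + q i) + (h + Z.of_nat n) + 2 * (- Z.of_nat i - q i) + -1)%Z by lia.
    rewrite (sgn_add _ (-1)), (sgn_add _ (2 * _)), (sgn_add (Z.of_nat i + q i) (h + Z.of_nat n)), Hs, sgn_2. change (sgn (-1)) with (-1). ring. }
  replace (2 * sm (n - 1) (fun l => sgn (Z.of_nat l + q l) * IZR (q l))) with
    (sm (n - 1) (fun l => sgn (Z.of_nat l + q l) * IZR (q l)) +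
     sm (n - 1) (fun l => sgn (Z.of_nat l + q l) * (IZR h - 1 - IZR (q l)))) by (rewrite <- R1; ring).
  rewrite <- sm_plus, <- sm_scal. apply sm_ext. intros; ring.
Qed.

Theorem theorem23 (h k : Z) :
  (0 < k)%Z -> Z.gcd h k = 1%Z -> Z.odd (Z.add h k) = true ->
  IZR (B1hk h k) =
    (1 - IZR h) / (2 * IZR k) *
    sumR1 k (fun j =>
      tan (PI * IZR h * (2 * IZR j - 1) / (2 * IZR k)) *
      cot (PI * (2 * IZR j - 1) / (2 * IZR k))).
Proof.
  intros Hk G Od.
  destruct (Z_of_nat_complete k) as [n ->]; [lia|].
  assert (Hn : (1 <= n)%nat) by lia.
  assert (nz : INR n <> 0) by (apply not_0_INR; lia).
  assert (Hs : sgn (h + Z.of_nat n) = -1).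
  { unfold sgn. rewrite <- Z.negb_odd, Od. reflexivity. }
  assert (Hs2 : sgn h = - sgn (Z.of_nat n)).
  { rewrite sgn_add in Hs. pose proof (sgn_sq (Z.of_nat n)). nra. }
  set (q := fun l : nat => ((h * Z.of_nat l) / Z.of_nat n)%Z).
  assert (L : IZR (B1hk h (Z.of_nat n)) = sm (n - 1) (fun l => sgn (Z.of_nat l + q l) * IZR (q l))).
  { unfold B1hk. rewrite IZR_fold. replace (Z.to_nat (Z.of_nat n - 1)) with (n - 1)%nat by lia.
    change (fold_right Rplus 0 (map (fun l : nat => IZR
      (let q0 := (h * Z.of_nat l / Z.of_nat n)%Z in ((if Z.even (Z.of_nat l + q0) then 1 else -1) * q0)%Z))
      (seq 1 (n - 1)))) with
      (sm (n - 1) (fun l : nat => IZR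
      (let q0 := (h * Z.of_nat l / Z.of_nat n)%Z in ((if Z.even (Z.of_nat l + q0) then 1 else -1) * q0)%Z))).
    apply sm_ext. intros l _. simpl. unfold sgn, q. rewrite mult_IZR.
    destruct (Z.even _); reflexivity. }
  assert (Rs : sumR1 (Z.of_nat n) (fun j =>
      tan (PI * IZR h * (2 * IZR j - 1) / (2 * IZR (Z.of_nat n))) *
      cot (PI * (2 * IZR j - 1) / (2 * IZR (Z.of_nat n)))) =
      sm (n - 1) (fun l => - INR n * sgn (Z.of_nat l + q l))).
  { unfold sumR1. rewrite Nat2Z.id. fold (sm n (fun j : nat =>
      tan (PI * IZR h * (2 * IZR (Z.of_nat j) - 1) / (2 * IZR (Z.of_nat n))) *
      cot (PI * (2 * IZR (Z.of_nat j) - 1) / (2 * IZR (Z.of_nat n))))).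
    rewrite (sm_ext n _ _ (fun j Hj => per_j n h j Hn Hj Hs2)).
    rewrite sm_swap. apply sm_ext. intros l Hl.
    rewrite sm_swap.
    rewrite (sm_ext (n - 1) _ (fun m => sgn (Z.of_nat l + 1) / 2 *
       (Dz n (h * Z.of_nat l - Z.of_nat m) - Dz n (h * Z.of_nat l + Z.of_nat m)))).
    2: { intros m Hm. rewrite sm_scal, sm_minus, !cos_sum by auto. reflexivity. }
    rewrite sm_scal, sm_minus, single_minus, single_plus by auto.
    fold (q l). rewrite (sgn_add (Z.of_nat l) 1), (sgn_add (q l) 1), (sgn_add (Z.of_nat l) (q l)), sgn_1. field. }
  rewrite L, Rs, sm_scal. rewrite <- INR_IZR_INZ.
  pose proof (reflect_id n h Hn G Hs) as RI. cbv zeta in RI. unfold q.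
  apply (Rmult_eq_reg_l 2); [|lra]. rewrite RI. field. auto.
Qed.
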